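(* Let $V$ be a real vector space with inner products $\langle\cdot,\cdot\rangle_1,\langle\cdot,\cdot\rangle_2$ and induced norms $\|\cdot\|_1,\|\cdot\|_2$. The following are equivalent: (1) there is $c>0$ with $\langle\cdot,\cdot\rangle_2=c\langle\cdot,\cdot\rangle_1$; (2) there is $c>0$ with $\|\cdot\|_2=c\|\cdot\|_1$; (3) for all nonzero $x,y\in V$, the angle between $x$ and $y$ with respect to $\langle\cdot,\cdot\rangle_1$ equals that with respect to $\langle\cdot,\cdot\rangle_2$; (4) for all nonzero $x,y\in V$, $\langle x,y\rangle_1=0$ if and only if $\langle x,y\rangle_2=0$; (5) there exists $\theta_0\in(0,\pi)$ such that for all nonzero $x,y\in V$, the angle between $x$ and $y$ with respect to $\langle\cdot,\cdot\rangle_1$ is $\theta_0$ if and only if the angle between them with respect to $\langle\cdot,\cdot\rangle_2$ is $\theta_0$.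
   Context: For an inner product $\langle\cdot,\cdot\rangle$ on a real vector space with norm $\|x\|=\sqrt{\langle x,x\rangle}$, the angle between nonzero vectors $x,y$ is the unique $\theta\in[0,\pi]$ with $\cos\theta=\langle x,y\rangle/(\|x\|\|y\|)$. *)

(* Defs.v *)
From mathcomp Require Import all_boot all_order all_algebra.
From mathcomp Require Import all_classical all_reals all_analysis.
Set Implicit Arguments. Unset Strict Implicit. Unset Printing Implicit Defensive.
Import Order.TTheory GRing.Theory Num.Theory.
Local Open Scope ring_scope.

Definition is_inner_product (R : realType) (V : lmodType R) (ip : V -> V -> R) : Prop :=
  [/\ (forall (a : R) (x y z : V), ip (a *: x + y) z = a * ip x z + ip y z),
      (forall x y : V, ip x y = ip y x)
    & (forall x : V, x != 0 -> 0 < ip x x)].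

Definition ipnorm (R : realType) (V : lmodType R) (ip : V -> V -> R) (x : V) : R :=
  Num.sqrt (ip x x).

Definition ipangle (R : realType) (V : lmodType R) (ip : V -> V -> R) (x y : V) : R :=
  acos (ip x y / (ipnorm ip x * ipnorm ip y)).

(* Main.v *)
Require Import Defs.
From mathcomp Require Import all_boot all_order all_algebra.
From mathcomp Require Import all_classical all_reals all_analysis.
From mathcomp Require Import ring lra.
Import Order.TTheory GRing.Theory Num.Theory.
Set Implicit Arguments. Unset Strict Implicit.
Local Open Scope ring_scope.

Section IP.
Variables (R : realType) (V : lmodType R) (ip : V -> V -> R).
Hypothesis h : is_inner_product ip.

Lemma ipDl x y z : ip (x + y) z = ip x z + ip y z.
Proof. case: h => L _ _. by rewrite -[x in ip (x + _)](scale1r x) L mul1r. Qed.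
Lemma ipZl a x z : ip (a *: x) z = a * ip x z.
Proof.
case: h => L _ _.
have H0 : ip 0 z = 0.
  have := L 1 0 0 z; rewrite scale1r addr0 mul1r => E; lra.
by rewrite -[a *: x]addr0 L H0 addr0.
Qed.
Lemma ip0l z : ip 0 z = 0.
Proof. by rewrite -(scale0r 0) ipZl mul0r. Qed.
Lemma ipNl x z : ip (- x) z = - ip x z.
Proof. by rewrite -scaleN1r ipZl mulN1r. Qed.
Lemma ipC x y : ip x y = ip y x.
Proof. by case: h. Qed.
Lemma ipDr x y z : ip z (x + y) = ip z x + ip z y.
Proof. by rewrite ipC ipDl !(ipC z). Qed.
Lemma ipZr a x z : ip z (a *: x) = a * ip z x.
Proof. by rewrite ipC ipZl ipC. Qed.
Lemma ip0r z : ip z 0 = 0.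
Proof. by rewrite ipC ip0l. Qed.
Lemma ipxx_gt0 x : x != 0 -> 0 < ip x x.
Proof. by case: h => _ _; apply. Qed.
Lemma ipxx_ge0 x : 0 <= ip x x.
Proof. case: (eqVneq x 0) => [->|/ipxx_gt0/ltW//]; by rewrite ip0l. Qed.
Lemma ipnorm_sq x : ipnorm ip x ^+ 2 = ip x x.
Proof. by rewrite /ipnorm sqr_sqrtr // ipxx_ge0. Qed.
Lemma ipnorm_gt0 x : x != 0 -> 0 < ipnorm ip x.
Proof. by move=> /ipxx_gt0 ?; rewrite /ipnorm sqrtr_gt0. Qed.

Lemma CS x y : ip x y ^+ 2 <= ip x x * ip y y.
Proof.
case: (eqVneq y 0) => [->|yn0]; first by rewrite !ip0r expr0n /= mulr0.
have yp := ipxx_gt0 yn0.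
set l := ip x y / ip y y.
have := ipxx_ge0 (x + (- l) *: y).
rewrite ipDl ipZl !ipDr !ipZr (ipC y x) => H.
have E : ip x x + - l * ip x y + - l * (ip x y + - l * ip y y)
   = ip x x - ip x y ^+ 2 / ip y y.
  rewrite /l; field; by rewrite gt_eqF.
rewrite E subr_ge0 ler_pdivrMr // in H.

Qed.

Definition ratio x y := ip x y / (ipnorm ip x * ipnorm ip y).

Lemma ratio_in x y : -1 <= ratio x y <= 1.
Proof.
case: (eqVneq x 0) => [->|xn0]; first by rewrite /ratio ip0l mul0r; lra.
case: (eqVneq y 0) => [->|yn0]; first by rewrite /ratio ip0r mul0r; lra.
have np : 0 < ipnorm ip x * ipnorm ip y by rewrite mulr_gt0 // ipnorm_gt0.
rewrite -ler_norml /ratio normrM [`|_^-1|]ger0_norm; last by rewrite invr_ge0 ltW.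
rewrite ler_pdivrMr // mul1r -(ler_pXn2r (n:=2)) ?nnegrE ?normr_ge0 ?(ltW np) //.
by rewrite real_normK ?num_real // exprMn !ipnorm_sq CS.
Qed.
End IP.

Arguments ratio {R V} ip x y.

Section Two.
Variables (R : realType) (V : lmodType R) (ip1 ip2 : V -> V -> R).
Hypotheses (h1 : is_inner_product ip1) (h2 : is_inner_product ip2).

Lemma key (H : forall x e, e != 0 -> ip1 x e = 0 -> ip2 x e = 0) :
  exists c : R, 0 < c /\ forall x y : V, ip2 x y = c * ip1 x y.
Proof.
pose k e := ip2 e e / ip1 e e.
have kp e : e != 0 -> 0 < k e.
  by move=> en; rewrite /k divr_gt0 // (ipxx_gt0 h1, ipxx_gt0 h2).
have A e x : e != 0 -> ip2 x e = k e * ip1 x e.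
  move=> en; have p1 := ipxx_gt0 h1 en.
  set l := ip1 x e / ip1 e e.
  have := H (x + (- l) *: e) e en.
  rewrite (ipDl h1) (ipZl h1) (ipDl h2) (ipZl h2) => H'.
  have E : ip1 x e + - l * ip1 e e = 0 by rewrite /l; field; rewrite gt_eqF.
  move/(_ E): H' => H'.
  have -> : ip2 x e = l * ip2 e e by lra.
  rewrite /k /l; field; by rewrite gt_eqF.
have B1 e f : e != 0 -> f != 0 -> ip1 e f != 0 -> k e = k f.
  move=> en fn nz.
  have := A f e fn; rewrite (ipC h2) A // (ipC h1 f e) => E.
  by apply: (mulIf nz).
have B e f : e != 0 -> f != 0 -> k e = k f.
  move=> en fn; case: (eqVneq (ip1 e f) 0) => [z|nz]; last exact: B1.
  have ge : ip1 e (e + f) = ip1 e e by rewrite (ipDr h1) z addr0.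
  have gf : ip1 f (e + f) = ip1 f f by rewrite (ipDr h1) (ipC h1 f e) z add0r.
  have gn : e + f != 0.
    apply/eqP => g0; move: ge; rewrite g0 (ip0r h1) => /esym/eqP.
    by rewrite gt_eqF // (ipxx_gt0 h1).
  rewrite (B1 e (e + f)) ?ge ?gt_eqF ?(ipxx_gt0 h1) //.
  by rewrite (B1 f (e + f)) ?gf ?gt_eqF ?(ipxx_gt0 h1).
case: (pselect (exists e : V, e != 0)) => [[e en]|none].
  exists (k e); split; first exact: kp.
  move=> x y; case: (eqVneq y 0) => [->|yn]; first by rewrite (ip0r h1) (ip0r h2) mulr0.
  by rewrite A // (B y e).
have all0 (x : V) : x = 0 by case: (eqVneq x 0) => // xn; exfalso; apply: none; exists x.
exists 1; split => // x y; by rewrite (all0 x) (ip0l h1) (ip0l h2) mulr0.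
Qed.
End Two.

Section Ang.
Variables (R : realType) (V : lmodType R) (ip : V -> V -> R).
Hypothesis h : is_inner_product ip.

Lemma angle_ratio x y : ipangle ip x y = acos (ratio ip x y).
Proof. by []. Qed.

Lemma ratio_cos x y : cos (ipangle ip x y) = ratio ip x y.
Proof. by rewrite angle_ratio acosK // in_itv /= ratio_in. Qed.

Lemma angle_theta x y t : 0 <= t <= pi -> (ipangle ip x y = t <-> ratio ip x y = cos t).
Proof.
move=> tin; split => [<-|E]; first by rewrite ratio_cos.
by rewrite angle_ratio E cosK // in_itv.
Qed.

Lemma ratio0 x y : x != 0 -> y != 0 -> (ratio ip x y = 0 <-> ip x y = 0).
Proof.
move=> xn yn; rewrite /ratio; split => [/eqP|->]; last by rewrite mul0r.
by rewrite mulf_eq0 invr_eq0 mulf_eq0 (gt_eqF (ipnorm_gt0 h xn)) (gt_eqF (ipnorm_gt0 h yn)) !orbF => /eqP.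
Qed.
End Ang.

Lemma angle_eq (R : realType) (V : lmodType R) (ip1 ip2 : V -> V -> R)
  (h1 : is_inner_product ip1) (h2 : is_inner_product ip2) x y :
  ipangle ip1 x y = ipangle ip2 x y <-> ratio ip1 x y = ratio ip2 x y.
Proof.
split => [E|E]; last by rewrite !angle_ratio E.
by rewrite -(ratio_cos h1) -(ratio_cos h2) E.
Qed.

Section Impl.
Variables (R : realType) (V : lmodType R) (ip1 ip2 : V -> V -> R).
Hypotheses (h1 : is_inner_product ip1) (h2 : is_inner_product ip2).

Definition P1 := exists c : R, 0 < c /\ forall x y : V, ip2 x y = c * ip1 x y.
Definition P2 := exists c : R, 0 < c /\ forall x : V, ipnorm ip2 x = c * ipnorm ip1 x.
Definition P3 := forall x y : V, x != 0 -> y != 0 -> ipangle ip1 x y = ipangle ip2 x y.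
Definition P4 := forall x y : V, x != 0 -> y != 0 -> (ip1 x y = 0 <-> ip2 x y = 0).
Definition P5 := exists theta0 : R, 0 < theta0 < pi /\
                 forall x y : V, x != 0 -> y != 0 ->
                   (ipangle ip1 x y = theta0 <-> ipangle ip2 x y = theta0).

Lemma p12 : P1 -> P2.
Proof.
case=> c [cp H]; exists (Num.sqrt c); split; first by rewrite sqrtr_gt0.
by move=> x; rewrite /ipnorm H sqrtrM // ltW.
Qed.

Lemma p21 : P2 -> P1.
Proof.
case=> c [cp H]; exists (c ^+ 2); split; first by rewrite exprn_gt0.
have sq z : ip2 z z = c ^+ 2 * ip1 z z.
  by rewrite -(ipnorm_sq h2) -(ipnorm_sq h1) H exprMn.
move=> x y; have := sq (x + y).
rewrite !(ipDl h1, ipDl h2, ipDr h1, ipDr h2) (ipC h1 y x) (ipC h2 y x) !sq.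
move=> E; lra.
Qed.

Lemma p13 : P1 -> P3.
Proof.
move=> [c [cp H]] x y xn yn; apply/(angle_eq h1 h2); rewrite /ratio.
have N z : ipnorm ip2 z = Num.sqrt c * ipnorm ip1 z by rewrite /ipnorm H sqrtrM // ltW.
have s2 : Num.sqrt c ^+ 2 = c by rewrite sqr_sqrtr // ltW.
have sp : 0 < Num.sqrt c by rewrite sqrtr_gt0.
rewrite H !N; move: s2 sp; set s := Num.sqrt c => s2 sp.
rewrite -s2; field.
by rewrite !gt_eqF ?(ipnorm_gt0 h1).
Qed.

Lemma p34 : P3 -> P4.
Proof.
move=> p3 x y xn yn; have /(angle_eq h1 h2) E := p3 x y xn yn.
by rewrite -(ratio0 h1 xn yn) -(ratio0 h2 xn yn) E.
Qed.

Lemma p41 : P4 -> P1.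
Proof.
move=> p4; apply: (key h1 h2) => x e en E.
case: (eqVneq x 0) => [->|xn]; first by rewrite (ip0l h2).
by apply/(p4 x e xn en).
Qed.

Lemma p35 : P3 -> P5.
Proof.
move=> p3; exists (pi / 2); split; first by have := pi_gt0 R; lra.
by move=> x y xn yn; rewrite p3.
Qed.
End Impl.

Section Impl5.
Variables (R : realType) (V : lmodType R) (ip1 ip2 : V -> V -> R).
Hypotheses (h1 : is_inner_product ip1) (h2 : is_inner_product ip2).

Lemma p51 : P5 ip1 ip2 -> P1 ip1 ip2.
Proof.
case=> th [/andP[th0 thpi] Hth].
have thin : 0 <= th <= pi by apply/andP; split; apply: ltW.
have thI : th \in `[0, pi] by rewrite in_itv /= thin.
set t := cos th.
have t1 : t != 1.
  apply/eqP => E; have := cosK thI; rewrite -/t E acos1 => ?; lra.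
have tm1 : t != -1.
  apply/eqP => E; have := cosK thI; rewrite -/t E acosN1 => ?; lra.
have tlo := cos_geN1 th; have thi := cos_le1 th; rewrite -/t in tlo thi.
have st : 0 < 1 - t ^+ 2.
  have : -1 < t by rewrite lt_neqAle eq_sym tm1 tlo.
  have : t < 1 by rewrite lt_neqAle t1 thi.
  move=> ? ?; nra.
apply: (key h1 h2) => x e en E0.
case: (eqVneq x 0) => [->|xn]; first by rewrite (ip0l h2).
case: (eqVneq t 0) => [tz|tn].
  have : ipangle ip1 x e = th.
    by apply/(angle_theta h1 _ _ thin); rewrite -/t tz; apply/(ratio0 h1 xn en).
  by move/(Hth x e xn en)/(angle_theta h2 _ _ thin); rewrite -/t tz => /(ratio0 h2 xn en).
have ap : 0 < ipnorm ip1 x by apply: ipnorm_gt0.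
have bp : 0 < ipnorm ip1 e by apply: ipnorm_gt0.
have aX := ipnorm_sq h1 x; have bE := ipnorm_sq h1 e.
move: ap bp aX bE; set a := ipnorm ip1 x; set b := ipnorm ip1 e => ap bp aX bE.
set al := t * a.
have step bt : bt ^+ 2 = (1 - t ^+ 2) * ip1 e e ->
    (al * ip2 e e + bt * ip2 x e) ^+ 2 =
    t ^+ 2 * (al * (al * ip2 e e + bt * ip2 x e) + bt * (al * ip2 x e + bt * ip2 x x)) * ip2 e e.
  move=> hbt; set w := al *: e + bt *: x.
  have we : ip1 w e = al * b ^+ 2.
    by rewrite /w (ipDl h1) !(ipZl h1) E0 mulr0 addr0 bE.
  have ww : ip1 w w = (a * b) ^+ 2.
    have -> : ip1 w w = al ^+ 2 * ip1 e e + bt ^+ 2 * ip1 x x.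
      rewrite /w !(ipDl h1, ipDr h1, ipZl h1, ipZr h1) (ipC h1 e x) E0; ring.
    rewrite hbt -aX -bE /al; ring.
  have nw : ipnorm ip1 w = a * b.
    by rewrite /ipnorm ww sqrtr_sqr ger0_norm // mulr_ge0 // ltW.
  have wn : w != 0.
    apply/eqP => w0; move: we; rewrite w0 (ip0l h1) => /esym/eqP.
    by rewrite /al !mulf_eq0 /= (negbTE tn) !gt_eqF.
  have r1 : ratio ip1 w e = t.
    rewrite /ratio we nw -/b /al; field.
    by rewrite !gt_eqF.
  have : ipangle ip1 w e = th by apply/(angle_theta h1 _ _ thin); rewrite r1.
  move/(Hth w e wn en)/(angle_theta h2 _ _ thin); rewrite -/t => r2.
  have n2w := ipnorm_gt0 h2 wn; have n2e := ipnorm_gt0 h2 en.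
  have : ip2 w e = t * (ipnorm ip2 w * ipnorm ip2 e).
    rewrite -r2 /ratio; field; by rewrite !gt_eqF.
  move=> /(congr1 (fun z => z ^+ 2)) /=; rewrite !exprMn !(ipnorm_sq h2).
  rewrite /w !(ipDl h2, ipDr h2, ipZl h2, ipZr h2) (ipC h2 e x) => Z.
  rewrite Z; ring.
pose bt := Num.sqrt ((1 - t ^+ 2) * ip1 e e).
have hbt : bt ^+ 2 = (1 - t ^+ 2) * ip1 e e.
  by rewrite sqr_sqrtr // mulr_ge0 ?(ipxx_ge0 h1) // ltW.
have S1 := step bt hbt.
have S2 := step (- bt) ltac:(by rewrite sqrrN).
have btp : 0 < bt by rewrite sqrtr_gt0 mulr_gt0 // -bE exprn_gt0.
have Ap : 0 < ip2 e e by apply: ipxx_gt0.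
have : al * bt * ip2 e e * ip2 x e * (1 - t ^+ 2) = 0 by nra.
move/eqP; rewrite !mulf_eq0 /al (negbTE tn) (gt_eqF btp) (gt_eqF Ap) (gt_eqF ap) (gt_eqF st) /= orbF; by move/eqP.
Qed.
End Impl5.

Unset Implicit Arguments. Set Strict Implicit.

Theorem mainTheorem6 (R : realType) (V : lmodType R) (ip1 ip2 : V -> V -> R)
  (h1 : is_inner_product ip1) (h2 : is_inner_product ip2) :
  [<->
    (* (1) *) (exists c : R, 0 < c /\ forall x y : V, ip2 x y = c * ip1 x y);
    (* (2) *) (exists c : R, 0 < c /\ forall x : V, ipnorm ip2 x = c * ipnorm ip1 x);
    (* (3) *) (forall x y : V, x != 0 -> y != 0 -> ipangle ip1 x y = ipangle ip2 x y);
    (* (4) *) (forall x y : V, x != 0 -> y != 0 -> (ip1 x y = 0 <-> ip2 x y = 0));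
    (* (5) *) (exists theta0 : R, 0 < theta0 < pi /\
                 forall x y : V, x != 0 -> y != 0 ->
                   (ipangle ip1 x y = theta0 <-> ipangle ip2 x y = theta0))].
Proof.
tfae.
- exact: p12.
- by move=> p2; apply: (p13 h1 h2); apply: (p21 h1 h2).
- exact: (p34 h1 h2).
- by move=> p4; apply: p35; apply: (p13 h1 h2); apply: (p41 h1 h2).
- exact: (p51 h1 h2).
Qed.
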